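(* Let $R_1,R_2$ be integrally closed integral domains with the same fraction field $K$. If the structure $(K;R_1,R_2)$ (the field $K$ in the language of rings expanded by unary predicates for $R_1$ and $R_2$) is inp-minimal, then $R_1\subseteq R_2$ or $R_2\subseteq R_1$.
   Context: Rings are commutative with identity. Inp-minimal: the theory of the structure has burden $1$ (no inp-pattern of depth $2$ in one variable). *)

(* Defs.v *)
From HB Require Import structures.
From mathcomp Require Import all_boot all_order all_algebra.
Set Implicit Arguments. Unset Strict Implicit. Unset Printing Implicit Defensive.
Import Order.TTheory GRing.Theory Num.Theory.
Local Open Scope ring_scope.

Definition is_subring (K : fieldType) (R : {pred K}) : Prop :=
  [/\ (1 : K) \in R,
      (forall x y, x \in R -> y \in R -> x - y \in R) &
      (forall x y, x \in R -> y \in R -> x * y \in R)].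

Definition has_fraction_field (K : fieldType) (R : {pred K}) : Prop :=
  forall x : K, exists a b, [/\ a \in R, b \in R, b != 0 & x = a / b].

Definition integrally_closed_in (K : fieldType) (R : {pred K}) : Prop :=
  forall (p : {poly K}) (x : K),
    p \is monic -> p \is a polyOver R -> root p x -> x \in R.

Inductive term : Type :=
| TVar : nat -> term
| TZero : term
| TOne : term
| TAdd : term -> term -> term
| TOpp : term -> term
| TMul : term -> term -> term.

Inductive form : Type :=
| FEq : term -> term -> form
| FP1 : term -> form
| FP2 : term -> form
| FFalse : form
| FNot : form -> form
| FAnd : form -> form -> form
| FOr : form -> form -> form
| FImp : form -> form -> form
| FEx : form -> form     (* binds de Bruijn variable 0 *)
| FAll : form -> form.

Record structure : Type := Structure {
  carrier :> Type;
  s_zero : carrier;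
  s_one : carrier;
  s_add : carrier -> carrier -> carrier;
  s_opp : carrier -> carrier;
  s_mul : carrier -> carrier -> carrier;
  s_P1 : carrier -> Prop;
  s_P2 : carrier -> Prop }.

Definition scons (M : Type) (x : M) (e : nat -> M) : nat -> M :=
  fun n => match n with 0 => x | S n' => e n' end.

Fixpoint teval (M : structure) (e : nat -> M) (t : term) : M :=
  match t with
  | TVar n => e n
  | TZero => s_zero M
  | TOne => s_one M
  | TAdd t1 t2 => s_add (teval e t1) (teval e t2)
  | TOpp t1 => s_opp (teval e t1)
  | TMul t1 t2 => s_mul (teval e t1) (teval e t2)
  end.

Fixpoint sat (M : structure) (e : nat -> M) (f : form) : Prop :=
  match f with
  | FEq t1 t2 => teval e t1 = teval e t2
  | FP1 t => s_P1 (teval e t)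
  | FP2 t => s_P2 (teval e t)
  | FFalse => False
  | FNot g => ~ sat e g
  | FAnd g h => sat e g /\ sat e h
  | FOr g h => sat e g \/ sat e h
  | FImp g h => sat e g -> sat e h
  | FEx g => exists x : M, sat (scons x e) g
  | FAll g => forall x : M, sat (scons x e) g
  end.

(* M |= f : f holds under every assignment (i.e. its universal closure holds). *)
Definition valid (M : structure) (f : form) : Prop := forall e : nat -> M, sat e f.

(* N is a model of Th(M). *)
Definition elem_equiv (M N : structure) : Prop :=
  forall f : form, valid M f <-> valid N f.

(* A formula
   phi(x; y) is read with x = de Bruijn variable 0 and the parameter tuple
   y = variables 1, 2, ...; the parameter a i j : nat -> N is the tuple
   substituted in row i, column j (j ranges over omega).
   Rows are k_i-inconsistent; every path is consistent. *)
Definition inp_pattern2 (N : structure) : Prop :=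
  exists (phi : 'I_2 -> form) (k : 'I_2 -> nat) (a : 'I_2 -> nat -> nat -> N),
    (forall i : 'I_2, forall S : seq nat, uniq S -> size S = k i ->
        ~ exists x : N, forall j, j \in S -> sat (scons x (a i j)) (phi i)) /\
    (forall f : 'I_2 -> nat,
        exists x : N, forall i : 'I_2, sat (scons x (a i (f i))) (phi i)).

Definition inp_minimal (M : structure) : Prop :=
  forall N : structure, elem_equiv M N -> ~ inp_pattern2 N.

Definition field_with_preds (K : fieldType) (R1 R2 : {pred K}) : structure :=
  @Structure K 0 1 (fun x y => x + y) (fun x => - x) (fun x y => x * y)
    (fun x => x \in R1) (fun x => x \in R2).

(* Main.v *)
Require Import Defs.
From HB Require Import structures.
From mathcomp Require Import all_boot all_order all_algebra.
Import Order.TTheory GRing.Theory Num.Theory.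
Local Open Scope ring_scope.
Set Implicit Arguments. Unset Strict Implicit.

Section S.
Variables (K : fieldType) (R : {pred K}).
Hypothesis sR : is_subring R.
Hypothesis icR : integrally_closed_in R.

Lemma R1 : 1 \in R. Proof. by case: sR. Qed.
Lemma RB x y : x \in R -> y \in R -> x - y \in R. Proof. by case: sR => _ H _; apply: H. Qed.
Lemma R0 : 0 \in R. Proof. by rewrite -(subrr 1) RB ?R1. Qed.
Lemma RN x : x \in R -> - x \in R. Proof. by move=> h; rewrite -sub0r RB ?R0. Qed.

Lemma RX x n : x \in R -> x ^+ n \in R.
Proof.
move=> hx; elim: n => [|n IH]; first by rewrite expr0 R1.
by rewrite exprS; case: sR => _ _ H; apply: H.
Qed.

Lemma pow_diff (b : K) (j k : nat) : b \notin R -> (j < k)%N -> b ^+ k - b ^+ j \notin R.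
Proof.
move=> bR ljk; apply/negP => hr; apply: (negP bR).
set r := b ^+ k - b ^+ j.
pose p : {poly K} := 'X^k + (- 'X^j - r%:P).
apply: (icR (p := p)) => //.
- rewrite monicE /p lead_coefDl ?lead_coefXn //.
  rewrite size_polyXn.
  apply: (leq_ltn_trans (size_polyD _ _)).
  rewrite !size_polyN size_polyXn gtn_max ltnS ljk /=.
  by rewrite (leq_ltn_trans (size_polyC_leq1 _)) //; case: (k) ljk.
- apply/allP => c /(nthP 0) [i _ <-].
  rewrite /p !(coefD, coefN, coefC, coefXn).
  have Hb (bb : bool) : (bb%:R : K) \in R by case: bb; rewrite ?R0 ?R1.
  have RD : forall x y, x \in R -> y \in R -> x + y \in R.
    by move=> x y hx hy; rewrite -[y]opprK RB ?RN.
  apply: (RD _ _ (Hb _)).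
  have Hb' : forall bb : bool, (1 *- bb : K) \in R by move=> bb; apply: RN.
  apply: (RD _ _ (Hb' _)).
  by case: (i == 0%N); apply: RN; rewrite ?R0.
- by rewrite /root /p !hornerE /r; apply/eqP; exact: subrr.
Qed.
Lemma pow_neq (b : K) (j k : nat) : b \notin R -> j != k -> b ^+ k - b ^+ j \notin R.
Proof.
move=> bR; rewrite neq_ltn => /orP [h|h]; first by move: (pow_diff bR h).
apply/negP => hr; apply: (negP (pow_diff bR h)).
by rewrite -opprB RN.
Qed.
End S.

From Stdlib Require Import Classical.
From mathcomp Require Import ring.

Theorem mainTheorem17 (K : fieldType) (R1 R2 : {pred K}) :
  is_subring R1 -> has_fraction_field R1 -> integrally_closed_in R1 ->
  is_subring R2 -> has_fraction_field R2 -> integrally_closed_in R2 ->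
  inp_minimal (field_with_preds R1 R2) ->
  {subset R1 <= R2} \/ {subset R2 <= R1}.
Proof.
move=> s1 _ ic1 s2 _ ic2 inp.
case: (classic ({subset R1 <= R2})) => [h|n12]; first by left.
case: (classic ({subset R2 <= R1})) => [h|n21]; first by right.
exfalso.
have [a [a1 a2]] : exists a, a \in R1 /\ a \notin R2.
  apply: NNPP => hn; apply: n12 => x hx; apply/negPn/negP => hx2; apply: hn; by exists x.
have [b [b2 b1]] : exists b, b \in R2 /\ b \notin R1.
  apply: NNPP => hn; apply: n21 => x hx; apply/negPn/negP => hx2; apply: hn; by exists x.
apply: (inp (field_with_preds R1 R2)); first by move=> f.
exists (fun i : 'I_2 => if val i == 0%N then FP1 (TAdd (TVar 0) (TOpp (TVar 1)))
                     else FP2 (TAdd (TVar 0) (TOpp (TVar 1)))),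
       (fun _ => 2%N),
       (fun i j _ => if val i == 0%N then b ^+ j else a ^+ j).
split.
- move=> i S uS sS [x hx].
  case: S uS sS hx => [|j1 [|j2 []]] //= uS _ hx.
  have h1 := hx j1 (mem_head _ _).
  have := hx j2; rewrite !inE eqxx orbT => /(_ isT) h2.
  have nj : j1 != j2 by move: uS; rewrite !inE andbT.
  clear hx; case: i h1 h2 => m pm; case: m pm => [|[|//]] pm /= h1 h2.
  + apply: (negP (pow_neq s1 ic1 b1 nj)).
    have -> : b ^+ j2 - b ^+ j1 = (x + - b ^+ j1) - (x + - b ^+ j2).
      by ring.
    exact: (RB s1).
  + apply: (negP (pow_neq s2 ic2 a2 nj)).
    have -> : a ^+ j2 - a ^+ j1 = (x + - a ^+ j1) - (x + - a ^+ j2).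
      by ring.
    exact: (RB s2).
- move=> f; exists (b ^+ f ord0 + a ^+ f ord_max).
  case=> m pm; case: m pm => [|[|//]] pm /=.
  + have -> : Ordinal pm = ord0 by apply: val_inj.
    rewrite (_ : b ^+ f ord0 + a ^+ f ord_max - b ^+ f ord0 = a ^+ f ord_max); [exact: (RX s1) | ring].
  + have -> : Ordinal pm = ord_max by apply: val_inj.
    rewrite (_ : b ^+ f ord0 + a ^+ f ord_max - a ^+ f ord_max = b ^+ f ord0); [exact: (RX s2) | ring].
Qed.
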